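(* Let $n\ge 2$, let $M_n=\{1,2,\dots,n\}$, and let $\mathcal{F}\subset 2^{M_n}$ be a union-closed family (i.e. $A\cup B\in\mathcal{F}$ whenever $A,B\in\mathcal{F}$) with $\bigcup_{A\in\mathcal{F}}A=M_n$. Fix $i\in M_n$ and put $\mathcal{G}=\{A\setminus\{i\}: A\in\mathcal{F}\}$. Fix $j\in M_n\setminus\{i\}$ and let $\mathcal{G}_j=\{A\in\mathcal{G}: j\in A\}$ and $\mathcal{F}_j=\{A\in\mathcal{F}: j\in A\}$. If $\frac{|\mathcal{G}_j|}{|\mathcal{G}|}\ge c$ for some constant $c\in(0,1]$, then $$\frac{|\mathcal{F}_j|}{|\mathcal{F}|}\ge \frac{1}{1+2(1-c)/c}.$$
   Context: $|X|$ denotes the cardinality of a set $X$; $2^{M_n}$ is the power set of $M_n$. Note $\mathcal{G}$ is a set of sets, so $|\mathcal{G}|$ counts distinct sets $A\setminus\{i\}$. *)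

(* Defs.v *)
From mathcomp Require Import all_boot all_order all_algebra.
Set Implicit Arguments. Unset Strict Implicit. Unset Printing Implicit Defensive.

(* Ground set M_n = {1,...,n} is encoded as 'I_n = {0,...,n-1}. *)
Definition union_closed (T : finType) (F : {set {set T}}) : Prop :=
  forall A B, A \in F -> B \in F -> A :|: B \in F.

(* Main.v *)
Require Import Defs.
From mathcomp Require Import all_boot all_order all_algebra.
From mathcomp Require Import ring lra zify.
Import Order.TTheory GRing.Theory Num.Theory.
Local Open Scope ring_scope.

Theorem lemma1p1 (R : realFieldType) (n : nat) (F : {set {set 'I_n}})
    (i j : 'I_n) (c : R) :
  (2 <= n)%N ->
  union_closed F ->
  \bigcup_(A in F) A = [set: 'I_n] ->
  j != i ->
  0 < c -> c <= 1 ->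
  let G := [set A :\ i | A in F] in
  let Gj := [set A in G | j \in A] in
  let Fj := [set A in F | j \in A] in
  c <= #|Gj|%:R / #|G|%:R ->
  1 / (1 + 2 * (1 - c) / c) <= #|Fj|%:R / #|F|%:R.
Proof.
move=> n2 _ hU ji c0 c1 G Gj Fj hc.
have Fn0 : (0 < #|F|)%N.
  rewrite card_gt0; apply/negP => /eqP F0.
  move: hU; rewrite F0 big_set0 => /esym/setP/(_ i).
  by rewrite in_set0 in_setT.
have Gn0 : (0 < #|G|)%N.
  move: Fn0; rewrite !card_gt0 => /set0Pn [A hA].
  by apply/set0Pn; exists (A :\ i); apply: imset_f.
have GjG : Gj \subset G by apply/subsetP => A; rewrite inE => /andP[].
have FjF : Fj \subset F by apply/subsetP => A; rewrite inE => /andP[].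
have h1 : (#|Gj| <= #|Fj|)%N.
  have -> : Gj = [set A :\ i | A in Fj].
    apply/setP => B; apply/idP/idP.
      rewrite inE => /andP[/imsetP[A hA ->] hj].
      apply: imset_f; rewrite inE hA /=.
      by move: hj; rewrite !inE => /andP[].
    move=> /imsetP[A]; rewrite inE => /andP[hA hj] ->.
    rewrite inE (imset_f _ hA) /= !inE hj andbT; exact: ji.
  exact: leq_imset_card.
have h2 : (#|F :\: Fj| <= 2 * #|G :\: Gj|)%N.
  set H := G :\: Gj.
  have sub : F :\: Fj \subset H :|: [set B :|: [set i] | B in H].
    apply/subsetP => A; rewrite in_setD => /andP[hj hA]; move: hj; rewrite inE hA /= => hj.
    have hB : A :\ i \in H.
      have hG : A :\ i \in G by exact: imset_f.
      rewrite /H in_setD hG andbT /Gj inE hG /= in_setD1.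
      by rewrite (negbTE hj) andbF.
    case hi: (i \in A).
      rewrite in_setU; apply/orP; right; apply/imsetP; exists (A :\ i) => //.
      by rewrite setUC setD1K.
    rewrite in_setU; apply/orP; left.
    suff -> : A = A :\ i by [].
    apply/setP => x; rewrite !inE; case: eqP => // ->; by rewrite hi.
  apply: (leq_trans (subset_leq_card sub)).
  apply: (leq_trans (leq_card_setU _ _)).
  by rewrite mul2n -addnn leq_add2l leq_imset_card.
move: h2; rewrite (cardsD F Fj) (cardsD G Gj).
rewrite (setIidPr FjF) (setIidPr GjG) => h2.
have hGj := subset_leq_card GjG.
have hFj := subset_leq_card FjF.
have e : (#|F| + 2 * #|Gj| <= #|Fj| + 2 * #|G|)%N.
  rewrite leq_subLR in h2.
  rewrite mulnBr in h2.
  have := leq_mul2l 2 #|Gj| #|G|; rewrite hGj /= => h3.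
  rewrite addnBA // leq_subRL in h2; first by rewrite addnC.
  exact: leq_trans h3 (leq_addl _ _).
move: h1 e hGj hc; set f := #|F|; set g := #|G|; set fj := #|Fj|; set gj := #|Gj|.
move=> h1 e hGj hc.
have rf : (0 : R) < f%:R by rewrite ltr0n.
have rg : (0 : R) < g%:R by rewrite ltr0n.
have r1 : (gj%:R : R) <= fj%:R by rewrite ler_nat.
have r2 : (f%:R + 2 * gj%:R : R) <= fj%:R + 2 * g%:R.
  by have := e; rewrite -(ler_nat R) !natrD; lra.
have r3 : c * g%:R <= gj%:R by rewrite -ler_pdivlMr.
have -> : 1 / (1 + 2 * (1 - c) / c) = c / (2 - c).
  by field; rewrite ?gt_eqF //; lra.
rewrite ler_pdivrMr; last lra.
rewrite mulrAC ler_pdivlMr //.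
nra.
Qed.
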